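(* There is an absolute constant $c>0$ such that the following holds. Let $A=\{a_1<\dots<a_k\}$ and $A'=\{a'_1<\dots<a'_k\}$ be sets of real numbers, each with $k$ elements, having distinct pairs of consecutive differences, and let $B,B'$ be arbitrary finite nonempty sets of real numbers. Then \[ |A+B|\cdot|A'+B'|\ge c\left(k^3|B||B'|\right)^{1/2}. \] In particular, if $k=|A|=|A'|=|B|=|B'|$, then $|A+B|\cdot|A'+B'|\ge c\,k^{5/2}$.
   Context: For finite $X,Y\subset\mathbb{R}$, $X+Y=\{x+y:x\in X,y\in Y\}$. For $1\le i\le k-1$ let $d_i=a_{i+1}-a_i$ and $d'_i=a'_{i+1}-a'_i$. The sets $A$ and $A'$ have distinct pairs of consecutive differences if the ordered pairs $(d_i,d'_i)$, $1\le i\le k-1$, are pairwise distinct. *)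

(* Defs.v *)
From Stdlib Require Import Reals List.
Import ListNotations.
Open Scope R_scope.

(* Finite sets of reals are represented by duplicate-free lists. *)

Definition sumset (X Y : list R) : list R :=
  nodup Req_EM_T (flat_map (fun x => map (fun y => x + y) Y) X).

Definition card_sumset (X Y : list R) : nat := length (sumset X Y).

(* The k-element set {a_1 < ... < a_k}, with a_{i+1} represented by a i. *)
Definition set_of (a : nat -> R) (k : nat) : list R := map a (seq 0 k).

Definition incr_on (a : nat -> R) (k : nat) : Prop :=
  forall i : nat, (i + 1 < k)%nat -> a i < a (i + 1)%nat.

Definition cdiff (a : nat -> R) (i : nat) : R := a (i + 1)%nat - a i.

Definition distinct_diff_pairs (a a' : nat -> R) (k : nat) : Prop :=
  forall i j : nat, (i < j)%nat -> (j + 1 < k)%nat ->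
    (cdiff a i, cdiff a' i) <> (cdiff a j, cdiff a' j).

(* Main.v *)
Require Import Defs.
From Stdlib Require Import Reals List Lia Lra.
Import ListNotations.
Open Scope R_scope.

Definition cnt_lt (S : list R) (x : R) : nat :=
  length (filter (fun z => if Rlt_dec z x then true else false) S).

Lemma cnt_lt_le S x : (cnt_lt S x <= length S)%nat.
Proof. unfold cnt_lt. induction S as [|z S IH]; simpl; [lia|].
  destruct (Rlt_dec z x); simpl; lia. Qed.

Lemma cnt_lt_mono_le S x y : x <= y -> (cnt_lt S x <= cnt_lt S y)%nat.
Proof. intro H. unfold cnt_lt. induction S as [|z S IH]; simpl; [lia|].
  destruct (Rlt_dec z x); destruct (Rlt_dec z y); simpl; try lia; lra. Qed.

Lemma cnt_lt_mono S x y : x < y -> In x S -> (cnt_lt S x < cnt_lt S y)%nat.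
Proof. intros H Hin. induction S as [|z S IH]; [destruct Hin|].
  unfold cnt_lt in *; simpl.
  destruct Hin as [->|Hin].
  - destruct (Rlt_dec x x); [lra|]. destruct (Rlt_dec x y); [|lra]. simpl.
    pose proof (cnt_lt_mono_le S x y (Rlt_le _ _ H)) as Hm. unfold cnt_lt in Hm. lia.
  - specialize (IH Hin). destruct (Rlt_dec z x); destruct (Rlt_dec z y); simpl; try lia; lra.
Qed.

Lemma cnt_lt_bound S x : In x S -> (cnt_lt S x < length S)%nat.
Proof. intro Hin. induction S as [|z S IH]; [destruct Hin|].
  unfold cnt_lt in *; simpl. destruct Hin as [->|Hin].
  - destruct (Rlt_dec x x); [lra|]. pose proof (cnt_lt_le S x). unfold cnt_lt in H. lia.
  - specialize (IH Hin). destruct (Rlt_dec z x); simpl; lia.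
Qed.

Lemma cnt_inj S x y : In x S -> In y S -> cnt_lt S x = cnt_lt S y -> x = y.
Proof. intros Hx Hy He. destruct (total_order_T x y) as [[H|H]|H]; auto.
  - pose proof (cnt_lt_mono S x y H Hx). lia.
  - pose proof (cnt_lt_mono S y x H Hy). lia. Qed.

Lemma NoDup_prod {A B : Type} (l : list A) (l' : list B) :
  NoDup l -> NoDup l' -> NoDup (list_prod l l').
Proof. intros H H'. induction H as [|x l Hx Hl IH]; simpl; [constructor|].
  apply NoDup_app; auto.
  - apply NoDup_map_NoDup_ForallPairs; auto. intros u v _ _ E. congruence.
  - intros [u v] Hin Hin2. apply in_map_iff in Hin as [w [E _]]. inversion E; subst.
    apply in_prod_iff in Hin2 as [? _]. contradiction.
Qed.

Fixpoint sumR (l : list R) : R := match l with nil => 0 | x :: t => x + sumR t end.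

Lemma sumR_app l1 l2 : sumR (l1 ++ l2) = sumR l1 + sumR l2.
Proof. induction l1; simpl; lra. Qed.

Lemma count_ineq {X : Type} (L : list X) (p : X -> bool) (h : X -> R) :
  (forall t, In t L -> 1 <= (if p t then 1 else 0) + h t) ->
  INR (length L) <= INR (length (filter p L)) + sumR (map h L).
Proof. induction L as [|t L IH]; intros H; cbn [length map sumR filter]; [simpl; lra|].
  assert (H1 := H t (or_introl eq_refl)).
  assert (IH' := IH (fun u Hu => H u (or_intror Hu))).
  rewrite S_INR. destruct (p t); cbn [length]; try rewrite S_INR; lra. Qed.

Lemma sumR_prod {X Y : Type} (l : list X) (l' : list Y) (h : X * Y -> R) :
  sumR (map h (list_prod l l')) = sumR (map (fun x => sumR (map (fun y => h (x,y)) l')) l).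
Proof. induction l as [|x l IH]; simpl; [reflexivity|].
  rewrite map_app, sumR_app, map_map, IH. reflexivity. Qed.

Lemma sumR_le_const {X : Type} (l : list X) (f : X -> R) C :
  (forall x, In x l -> f x <= C) -> sumR (map f l) <= INR (length l) * C.
Proof. induction l as [|x l IH]; intros H; cbn [length map sumR]; [simpl; lra|].
  rewrite S_INR. assert (H1 := H x (or_introl eq_refl)).
  assert (IH' := IH (fun u Hu => H u (or_intror Hu))). lra. Qed.

Lemma tele (f f' : nat -> R) (u u' : R) q :
  sumR (map (fun i => (f (i+1)%nat - f i) * u + (f' (i+1)%nat - f' i) * u') (seq 0 q))
  = (f q - f 0%nat) * u + (f' q - f' 0%nat) * u'.
Proof. induction q as [|q IH]; [simpl; ring|].
  rewrite seq_S, map_app, sumR_app, IH. simpl.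
  replace (q+1)%nat with (S q) by lia. ring. Qed.

Lemma in_sumset a k B i b : (i < k)%nat -> In b B -> In (a i + b) (sumset (set_of a k) B).
Proof. intros Hi Hb. unfold sumset. apply nodup_In. apply in_flat_map.
  exists (a i). split.
  - unfold set_of. apply in_map. apply in_seq. lia.
  - apply (in_map (fun y => a i + y)). exact Hb. Qed.

Lemma piece1 (D M : R) : 0 <= M -> D >= M + 1 -> D * / (M + 1) >= 1.
Proof. intros HM HD. assert (0 < M + 1) by lra.
  apply Rle_ge. apply Rle_trans with ((M+1) * / (M+1)); [right; field; lra|].
  apply Rmult_le_compat_r; [left; apply Rinv_0_lt_compat; lra | lra]. Qed.

Lemma piece0 (D M : R) : 0 <= M -> D >= 0 -> D * / (M + 1) >= 0.
Proof. intros HM HD. apply Rle_ge. apply Rmult_le_pos; [lra|]. left; apply Rinv_0_lt_compat; lra. Qed.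

Lemma main_k2 k a a' B B' : (2 <= k)%nat -> incr_on a k -> incr_on a' k ->
  distinct_diff_pairs a a' k -> NoDup B -> NoDup B' ->
  sqrt (INR k ^ 3 * INR (length B) * INR (length B')) <=
  16 * (INR (card_sumset (set_of a k) B) * INR (card_sumset (set_of a' k) B')).
Proof.
  intros Hk Ha Ha' Hd HB HB'. unfold card_sumset.
  set (S := sumset (set_of a k) B). set (S' := sumset (set_of a' k) B').
  set (sN := length S). set (sN' := length S').
  set (q := (k-1)%nat).
  assert (Hq : (0<q)%nat) by lia.
  set (m := (4*sN / q)%nat). set (m' := (4*sN' / q)%nat).
  assert (Hm1 : (m*q <= 4*sN)%nat).
  { unfold m. rewrite Nat.mul_comm. apply Nat.Div0.mul_div_le. }
  assert (Hm2 : (4*sN < (m+1)*q)%nat).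
  { pose proof (Nat.div_mod (4*sN) q ltac:(lia)) as E.
    pose proof (Nat.mod_upper_bound (4*sN) q ltac:(lia)). fold m in E. nia. }
  assert (Hm1' : (m'*q <= 4*sN')%nat).
  { unfold m'. rewrite Nat.mul_comm. apply Nat.Div0.mul_div_le. }
  assert (Hm2' : (4*sN' < (m'+1)*q)%nat).
  { pose proof (Nat.div_mod (4*sN') q ltac:(lia)) as E.
    pose proof (Nat.mod_upper_bound (4*sN') q ltac:(lia)). fold m' in E. nia. }
  set (r := cnt_lt S). set (r' := cnt_lt S').
  set (L := list_prod (list_prod B B') (seq 0 q)).
  set (gn := fun t : (R*R)*nat => (r ((a (snd t + 1)%nat + fst (fst t))%R) - r ((a (snd t) + fst (fst t))%R))%nat).
  set (gn' := fun t : (R*R)*nat => (r' ((a' (snd t + 1)%nat + snd (fst t))%R) - r' ((a' (snd t) + snd (fst t))%R))%nat).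
  set (short := fun t => andb (Nat.leb (gn t) m) (Nat.leb (gn' t) m')).
  set (u := / (INR m + 1)). set (u' := / (INR m' + 1)).
  assert (Hu : 0 < u) by (apply Rinv_0_lt_compat; pose proof (pos_INR m); lra).
  assert (Hu' : 0 < u') by (apply Rinv_0_lt_compat; pose proof (pos_INR m'); lra).
  set (h := fun t : (R*R)*nat =>
     (INR (r ((a (snd t + 1)%nat + fst (fst t))%R)) - INR (r ((a (snd t) + fst (fst t))%R))) * u +
     (INR (r' ((a' (snd t + 1)%nat + snd (fst t))%R)) - INR (r' ((a' (snd t) + snd (fst t))%R))) * u').
  assert (HL : forall b b' i, In ((b,b'),i) L -> (i < q)%nat /\ In b B /\ In b' B').
  { intros b b' i Hin. unfold L in Hin. apply in_prod_iff in Hin as [H1 H2].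
    apply in_prod_iff in H1 as [H1 H3]. apply in_seq in H2. repeat split; auto; lia. }
  assert (Hfacts : forall b b' i, In ((b,b'),i) L ->
     In (a i + b) S /\ In (a (i+1)%nat + b) S /\ In (a' i + b') S' /\ In (a' (i+1)%nat + b') S' /\
     (r ((a i + b)%R) < r ((a (i+1)%nat + b)%R))%nat /\ (r' ((a' i + b')%R) < r' ((a' (i+1)%nat + b')%R))%nat).
  { intros b b' i Hin. destruct (HL _ _ _ Hin) as [Hi [Hb Hb']].
    assert (X1 : In (a i + b) S) by (apply in_sumset; auto; lia).
    assert (X2 : In (a (i+1)%nat + b) S) by (apply in_sumset; auto; lia).
    assert (X3 : In (a' i + b') S') by (apply in_sumset; auto; lia).
    assert (X4 : In (a' (i+1)%nat + b') S') by (apply in_sumset; auto; lia).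
    repeat split; auto.
    - apply cnt_lt_mono; auto. pose proof (Ha i ltac:(lia)). lra.
    - apply cnt_lt_mono; auto. pose proof (Ha' i ltac:(lia)). lra. }
  assert (St1 : INR (length L) <= INR (length (filter short L)) + sumR (map h L)).
  { apply count_ineq. intros [[b b'] i] Hin.
    destruct (Hfacts _ _ _ Hin) as [_ [_ [_ [_ [Hl1 Hl2]]]]].
    unfold short, gn, gn', h; cbn [fst snd].
    pose proof (pos_INR m). pose proof (pos_INR m').
    assert (E1 : INR (r ((a (i+1)%nat + b)%R)) - INR (r ((a i + b)%R)) >= 0)
      by (pose proof (lt_INR _ _ Hl1); lra).
    assert (E2 : INR (r' ((a' (i+1)%nat + b')%R)) - INR (r' ((a' i + b')%R)) >= 0)
      by (pose proof (lt_INR _ _ Hl2); lra).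
    pose proof (piece0 _ _ H E1) as P1. pose proof (piece0 _ _ H0 E2) as P2. change (/ (INR m + 1)) with u in P1. change (/ (INR m' + 1)) with u' in P2.
    destruct (Nat.leb_spec (r ((a (i+1)%nat + b)%R) - r ((a i + b)%R)) m);
    destruct (Nat.leb_spec (r' ((a' (i+1)%nat + b')%R) - r' ((a' i + b')%R)) m'); simpl andb.
    - lra.
    - assert (F : INR (r' ((a' (i+1)%nat + b')%R)) - INR (r' ((a' i + b')%R)) >= INR m' + 1).
      { assert (G: (r' ((a' i + b')%R) + m' + 1 <= r' ((a' (i+1)%nat + b')%R))%nat) by lia.
        apply le_INR in G. rewrite !plus_INR in G. simpl in G. lra. }
      pose proof (piece1 _ _ H0 F) as P3. change (/ (INR m' + 1)) with u' in P3. lra.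
    - assert (F : INR (r ((a (i+1)%nat + b)%R)) - INR (r ((a i + b)%R)) >= INR m + 1).
      { assert (G: (r ((a i + b)%R) + m + 1 <= r ((a (i+1)%nat + b)%R))%nat) by lia.
        apply le_INR in G. rewrite !plus_INR in G. simpl in G. lra. }
      pose proof (piece1 _ _ H F) as P3. change (/ (INR m + 1)) with u in P3. lra.
    - assert (F : INR (r ((a (i+1)%nat + b)%R)) - INR (r ((a i + b)%R)) >= INR m + 1).
      { assert (G: (r ((a i + b)%R) + m + 1 <= r ((a (i+1)%nat + b)%R))%nat) by lia.
        apply le_INR in G. rewrite !plus_INR in G. simpl in G. lra. }
      pose proof (piece1 _ _ H F) as P3. change (/ (INR m + 1)) with u in P3. lra. }
  assert (St2 : sumR (map h L) <= INR (length (list_prod B B')) * (INR sN * u + INR sN' * u')).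
  { unfold L. rewrite sumR_prod. apply sumR_le_const. intros [b b'] _.
    eapply Rle_trans; [right; exact (tele (fun i => INR (r ((a i + b)%R))) (fun i => INR (r' ((a' i + b')%R))) u u' q)|].
    cbv beta.
    pose proof (pos_INR (r ((a 0%nat + b)%R))). pose proof (pos_INR (r' ((a' 0%nat + b')%R))).
    pose proof (le_INR _ _ (cnt_lt_le S (a q + b))) as Q1. pose proof (le_INR _ _ (cnt_lt_le S' (a' q + b'))) as Q2.
    change (cnt_lt S) with r in Q1. change (cnt_lt S') with r' in Q2. change (length S) with sN in Q1. change (length S') with sN' in Q2.
    apply Rplus_le_compat; apply Rmult_le_compat_r; lra. }
  assert (St3 : (length (filter short L) <= sN * (m * (sN' * m')))%nat).
  { set (phi := fun t : (R*R)*nat => (r ((a (snd t) + fst (fst t))%R), (gn t, (r' ((a' (snd t) + snd (fst t))%R), gn' t)))).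
    set (Mx := list_prod (seq 0 sN) (list_prod (seq 1 m) (list_prod (seq 0 sN') (seq 1 m')))).
    assert (LM : length Mx = (sN * (m * (sN' * m')))%nat) by (unfold Mx; rewrite !length_prod, !length_seq; reflexivity).
    rewrite <- LM, <- (length_map phi). apply NoDup_incl_length.
    - apply NoDup_map_NoDup_ForallPairs.
      + intros [[b1 b1'] i1] [[b2 b2'] i2] H1 H2 E.
        apply filter_In in H1 as [H1 _]. apply filter_In in H2 as [H2 _].
        destruct (Hfacts _ _ _ H1) as [X1 [Y1 [X1' [Y1' [L1 L1']]]]].
        destruct (Hfacts _ _ _ H2) as [X2 [Y2 [X2' [Y2' [L2 L2']]]]].
        destruct (HL _ _ _ H1) as [Hi1 _]. destruct (HL _ _ _ H2) as [Hi2 _].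
        unfold phi, gn, gn' in E; cbn [fst snd] in E. inversion E as [[Ex Eg Ex' Eg']].
        assert (Ex2 : a i1 + b1 = a i2 + b2) by (apply (cnt_inj S); auto).
        assert (Ex2' : a' i1 + b1' = a' i2 + b2') by (apply (cnt_inj S'); auto).
        assert (Ey2 : a (i1+1)%nat + b1 = a (i2+1)%nat + b2) by (apply (cnt_inj S); auto; fold r; lia).
        assert (Ey2' : a' (i1+1)%nat + b1' = a' (i2+1)%nat + b2') by (apply (cnt_inj S'); auto; fold r'; lia).
        assert (Hc : (cdiff a i1, cdiff a' i1) = (cdiff a i2, cdiff a' i2)).
        { unfold cdiff. f_equal; lra. }
        assert (i1 = i2).
        { destruct (Nat.lt_total i1 i2) as [Hlt|[Heq|Hlt]]; auto.
          - exfalso. apply (Hd i1 i2 Hlt ltac:(lia) Hc).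
          - exfalso. apply (Hd i2 i1 Hlt ltac:(lia) (eq_sym Hc)). }
        subst i2. f_equal; f_equal; lra.
      + apply NoDup_filter. apply NoDup_prod; [apply NoDup_prod; auto | apply seq_NoDup].
    - intros z Hz. apply in_map_iff in Hz as [[[b b'] i] [Ez Hin]].
      apply filter_In in Hin as [Hin Hs]. subst z.
      destruct (Hfacts _ _ _ Hin) as [X1 [Y1 [X1' [Y1' [L1 L1']]]]].
      unfold short in Hs. apply andb_prop in Hs as [Hs1 Hs2].
      apply Nat.leb_le in Hs1. apply Nat.leb_le in Hs2.
      unfold gn, gn' in Hs1, Hs2; cbn [fst snd] in Hs1, Hs2.
      unfold phi, gn, gn', Mx; cbn [fst snd].
      pose proof (cnt_lt_bound S _ X1) as Q1. pose proof (cnt_lt_bound S' _ X1') as Q2.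
      change (cnt_lt S) with r in Q1. change (cnt_lt S') with r' in Q2. change (length S) with sN in Q1. change (length S') with sN' in Q2.
      repeat (apply in_prod_iff; split); apply in_seq; lia. }
  assert (LL : length L = (length B * length B' * q)%nat) by (unfold L; rewrite !length_prod, length_seq; reflexivity).
  rewrite LL in St1. rewrite length_prod in St2.
  apply le_INR in St3. repeat rewrite mult_INR in St1. repeat rewrite mult_INR in St2. repeat rewrite mult_INR in St3.
  apply le_INR in Hm1. apply lt_INR in Hm2. apply le_INR in Hm1'. apply lt_INR in Hm2'.
  rewrite ?mult_INR, ?plus_INR in Hm1, Hm2, Hm1', Hm2'. rewrite plus_INR in Hm2, Hm2'. simpl INR in Hm1, Hm2, Hm1', Hm2'.
  pose proof (pos_INR m). pose proof (pos_INR m'). pose proof (pos_INR sN). pose proof (pos_INR sN').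
  pose proof (pos_INR (length B)). pose proof (pos_INR (length B')).
  set (Q := INR q) in *. set (M := INR m) in *. set (M' := INR m') in *.
  set (s := INR sN) in *. set (s' := INR sN') in *.
  set (bb := INR (length B)) in *. set (bb' := INR (length B')) in *.
  assert (HQ : 0 < Q) by (apply lt_0_INR; lia).
  assert (Su : s * u <= Q/4).
  { apply (Rmult_le_reg_r (M+1)); [lra|].
    replace (s*u*(M+1)) with s by (unfold u; field; lra). lra. }
  assert (Su' : s' * u' <= Q/4).
  { apply (Rmult_le_reg_r (M'+1)); [lra|].
    replace (s'*u'*(M'+1)) with s' by (unfold u'; field; lra). lra. }
  set (P := bb * bb') in *.
  assert (HP : 0 <= P) by (apply Rmult_le_pos; lra).
  assert (A1 : P * (s*u + s'*u') <= P * (Q/2)) by (apply Rmult_le_compat_l; lra).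
  assert (A2 : P * Q / 2 <= s * (M * (s' * M'))) by (assert (P*(Q/2) = P*Q/2) by field; lra).
  assert (HK : INR k <= 2 * Q).
  { unfold Q, q. rewrite minus_INR by lia. simpl INR. pose proof (le_INR 2 k Hk). simpl in H5. lra. }
  assert (HK0 : 0 <= INR k) by apply pos_INR.
  assert (A3 : INR k ^ 3 * bb * bb' <= 8 * (Q^2 * (P * Q))).
  { replace (INR k ^ 3 * bb * bb') with (INR k ^ 3 * P) by (unfold P; ring).
    replace (8 * (Q^2 * (P*Q))) with ((2*Q)^3 * P) by ring.
    apply Rmult_le_compat_r; auto. apply pow_incr; lra. }
  assert (A4 : Q^2 * (P*Q) <= 2 * (s*s') * ((M*Q)*(M'*Q))).
  { replace (2 * (s*s') * ((M*Q)*(M'*Q))) with (Q^2 * (2 * (s * (M * (s' * M'))))) by ring.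
    apply Rmult_le_compat_l; [nra|lra]. }
  assert (A5 : (M*Q)*(M'*Q) <= (4*s)*(4*s')).
  { apply Rmult_le_compat; try lra; apply Rmult_le_pos; lra. }
  assert (A6 : 2 * (s*s') * ((M*Q)*(M'*Q)) <= 2 * (s*s') * ((4*s)*(4*s'))).
  { apply Rmult_le_compat_l; [nra|exact A5]. }
  assert (Fin : INR k ^ 3 * bb * bb' <= (16*(s*s')) * (16*(s*s'))) by nra.
  rewrite <- (sqrt_square (16*(s*s'))) by nra.
  apply sqrt_le_1_alt. exact Fin.
Qed.

Lemma card_ge k a B : (1 <= k)%nat -> NoDup B -> (length B <= card_sumset (set_of a k) B)%nat.
Proof. intros Hk HB. unfold card_sumset. rewrite <- (length_map (fun b => a 0%nat + b) B).
  apply NoDup_incl_length.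
  - apply NoDup_map_NoDup_ForallPairs; auto. intros x y _ _ E. lra.
  - intros z Hz. apply in_map_iff in Hz as [b [<- Hb]]. apply in_sumset; auto. Qed.

Theorem theorem3 :
  exists c : R, 0 < c /\
    forall (k : nat) (a a' : nat -> R) (B B' : list R),
      incr_on a k -> incr_on a' k ->
      distinct_diff_pairs a a' k ->
      NoDup B -> NoDup B' -> B <> nil -> B' <> nil ->
      INR (card_sumset (set_of a k) B) * INR (card_sumset (set_of a' k) B')
        >= c * sqrt (INR k ^ 3 * INR (length B) * INR (length B')).
Proof.
  exists (1/16). split; [lra|].
  intros k a a' B B' Ha Ha' Hd HB HB' HBn HBn'.
  pose proof (pos_INR (card_sumset (set_of a k) B)) as P1.
  pose proof (pos_INR (card_sumset (set_of a' k) B')) as P2.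
  assert (P3 : 0 <= INR (card_sumset (set_of a k) B) * INR (card_sumset (set_of a' k) B'))
    by (apply Rmult_le_pos; auto).
  destruct k as [|[|k]].
  - simpl INR. replace ((0 ^ 3) * INR (length B) * INR (length B')) with 0 by ring.
    rewrite sqrt_0. lra.
  - pose proof (le_INR _ _ (card_ge 1 a B ltac:(lia) HB)) as C1.
    pose proof (le_INR _ _ (card_ge 1 a' B' ltac:(lia) HB')) as C2.
    assert (G1 : (1 <= length B)%nat) by (destruct B; [congruence|simpl; lia]).
    assert (G2 : (1 <= length B')%nat) by (destruct B'; [congruence|simpl; lia]).
    apply le_INR in G1. apply le_INR in G2. simpl INR in G1, G2.
    set (x := INR (length B)) in *. set (y := INR (length B')) in *.
    assert (Hxy : 1 <= x * y) by nra.
    assert (Hs : sqrt (INR 1 ^ 3 * x * y) <= x * y).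
    { simpl INR. replace (1 ^ 3 * x * y) with (x*y) by ring.
      rewrite <- (sqrt_square (x*y)) at 2 by lra. apply sqrt_le_1_alt. nra. }
    assert (x * y <= INR (card_sumset (set_of a 1) B) * INR (card_sumset (set_of a' 1) B'))
      by (apply Rmult_le_compat; lra).
    pose proof (sqrt_pos (INR 1 ^ 3 * x * y)). lra.
  - pose proof (main_k2 (S (S k)) a a' B B' ltac:(lia) Ha Ha' Hd HB HB'). lra.
Qed.
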